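(* For $k\in\mathbb{Z}/(l+1)\mathbb{Z}$ and $0\le r\le l-1$, define $g_{k,r}=s_{k+r}s_{k+r-1}\cdots s_{k+1}\big(\alpha_k/f_k\big)$ (with $g_{k,0}=\alpha_k/f_k$). Then $g_{k,r}$ equals the continued fraction $$g_{k,r}=\cfrac{\alpha_k+\alpha_{k+1}+\cdots+\alpha_{k+r}}{f_k-\cfrac{\alpha_{k+1}+\cdots+\alpha_{k+r}}{f_{k+1}-\cfrac{\ddots}{\ddots-\cfrac{\alpha_{k+r}}{f_{k+r}}}}}.$$ Moreover the translation $T_1=\pi s_ls_{l-1}\cdots s_1$ acts by $$T_1(f_0)=f_1-g_{2,l-1}+g_{0,0},\qquad T_1(f_1)=f_2-g_{3,l-2},$$ $$T_1(f_j)=f_{j+1}-g_{j+2,\,l-1-j}+g_{j,\,l+1-j}\quad(2\le j\le l-1),\qquad T_1(f_l)=f_0+g_{l,1},$$ and $T_1(\alpha_0)=\alpha_0+\delta$, $T_1(\alpha_1)=\alpha_1-\delta$, $T_1(\alpha_j)=\alpha_j$ for $j\neq0,1$.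
   Context: Let $l\ge2$ and index by $\mathbb{Z}/(l+1)\mathbb{Z}$. Let $\mathbb{C}(\alpha;f)$ be the field of rational functions over $\mathbb{C}$ in independent variables $\alpha_0,\dots,\alpha_l,f_0,\dots,f_l$, and set $\delta=\alpha_0+\cdots+\alpha_l$. For each $i$, $s_i$ is the field automorphism with $s_i(\alpha_i)=-\alpha_i$, $s_i(\alpha_{i\pm1})=\alpha_{i\pm1}+\alpha_i$, $s_i(\alpha_j)=\alpha_j$ for $j\ne i,i\pm1$, $s_i(f_i)=f_i$, $s_i(f_{i+1})=f_{i+1}+\alpha_i/f_i$, $s_i(f_{i-1})=f_{i-1}-\alpha_i/f_i$, $s_i(f_j)=f_j$ for $j\neq i,i\pm1$; and $\pi$ is the automorphism with $\pi(\alpha_j)=\alpha_{j+1}$, $\pi(f_j)=f_{j+1}$. Products of automorphisms are compositions, $(gh)(x)=g(h(x))$. *)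

(* Defs.v *)
From HB Require Import structures.
From mathcomp Require Import all_boot all_order all_algebra.
From mathcomp Require Import fraction.
From mathcomp Require Import mpoly.
From mathcomp Require Import complex.
From mathcomp Require Import Rstruct.
From Stdlib Require Rdefinitions.

Unset Printing Implicit Defensive.
Import GRing.Theory.
Local Open Scope ring_scope.

Definition CC := (Rdefinitions.R)[i].

Section Tau.
Variable l : nat.

(* 2(l+1) indeterminates: index v < l+1 is alpha_v, index l+1+j is f_j. *)
Definition NV := (l.+1 + l.+1)%N.

Definition KF := {fraction {mpoly CC[NV]}}.

Definition var (v : nat) : KF := tofrac ('X_(inord v) : {mpoly CC[NV]}).

(* Indices live in Z/(l+1)Z: a nat index j is read modulo l+1. *)
Definition alpha (j : nat) : KF := var (j %% l.+1).
Definition fv (j : nat) : KF := var (l.+1 + j %% l.+1).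

Definition delta : KF := \sum_(i < l.+1) alpha i.

Definition subst (h : 'I_NV -> KF) (x : KF) : KF :=
  let r := repr x in
  mmap (fun c : CC => tofrac (c%:MP : {mpoly CC[NV]})) h (\n_r)
  / mmap (fun c : CC => tofrac (c%:MP : {mpoly CC[NV]})) h (\d_r).

Definition genimg (a' f' : nat -> KF) : 'I_NV -> KF :=
  fun v => if (v < l.+1)%N then a' v else f' (v - l.+1)%N.

Definition eqm (i j : nat) : bool := (i == j %[mod l.+1]).

Definition s_alpha (i j : nat) : KF :=
  if eqm j i then - alpha j
  else if eqm j i.+1 || eqm j (i + l)%N then alpha j + alpha i
  else alpha j.
Definition s_f (i j : nat) : KF :=
  if eqm j i then fv j
  else if eqm j i.+1 then fv j + alpha i / fv i
  else if eqm j (i + l)%N then fv j - alpha i / fv i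
  else fv j.
Definition s (i : nat) : KF -> KF := subst (genimg (s_alpha i) (s_f i)).

Definition pi : KF -> KF := subst (genimg (fun j => alpha j.+1) (fun j => fv j.+1)).

Fixpoint g (k r : nat) : KF :=
  match r with
  | 0 => alpha k / fv k
  | r'.+1 => s (k + r'.+1) (g k r')
  end.

Fixpoint cfrac (k r : nat) : KF :=
  match r with
  | 0 => alpha k / fv k
  | r'.+1 => (\sum_(i < r'.+2) alpha (k + i)) / (fv k - cfrac k.+1 r')
  end.

Fixpoint sprod (m : nat) (x : KF) : KF :=
  match m with
  | 0 => x
  | m'.+1 => s m'.+1 (sprod m' x)
  end.

Definition T1 (x : KF) : KF := pi (sprod l x).

End Tau.

(* Main.v *)
Require Import Defs.
From HB Require Import structures.
From mathcomp Require Import all_boot all_order all_algebra.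
From mathcomp Require Import fraction mpoly complex Rstruct.
From mathcomp Require Import ring zify.
Import GRing.Theory.
Local Open Scope ring_scope.

Section FracRepr.
Variable R : idomainType.
Import FracField.
Lemma frac_repr (x : {fraction R}) : x = tofrac (\n_(repr x)) / tofrac (\d_(repr x)).
Proof.
rewrite -{1}[x]reprK.
have hd := denom_ratioP (repr x).
unlock tofrac.
rewrite -[_^-1]pi_inv -[RHS]pi_mul /invf /mulf /= !numden_Ratio ?oner_neq0 //.
by rewrite mul1r mulr1 Ratio_numden.
Qed.
Lemma frac_reprd (x : {fraction R}) : \d_(repr x) != 0.
Proof. exact: denom_ratioP. Qed.
End FracRepr.
Arguments frac_repr {R}.
Arguments frac_reprd {R}.

Section Gen.
Variable n : nat.
Local Notation P := {mpoly CC[n]}.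
Local Notation K := {fraction P}.
Definition cst : {rmorphism CC -> K} := (@tofrac P \o (@mpolyC n CC))%FUN.
Definition ev (y : 'I_n -> K) (p : P) : K := mmap cst y p.
Lemma evX y i : ev y 'X_i = y i.
Proof. by rewrite /ev mmapX mmap1U. Qed.
Lemma evC y c : ev y c%:MP = tofrac c%:MP.
Proof. by rewrite /ev mmapC. Qed.
Lemma evM y : {morph ev y : a b / a * b}.
Proof. exact: rmorphM. Qed.
Lemma evD y : {morph ev y : a b / a + b}.
Proof. exact: rmorphD. Qed.
Lemma evB y : {morph ev y : a b / a - b}.
Proof. exact: rmorphB. Qed.
Lemma evN y : {morph ev y : a / - a}.
Proof. exact: rmorphN. Qed.
Lemma ev0 y : ev y 0 = 0.
Proof. exact: rmorph0. Qed.
Lemma ev1 y : ev y 1 = 1.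
Proof. exact: rmorph1. Qed.
Lemma evXn y k : {morph ev y : a / a ^+ k}.
Proof. exact: rmorphXn. Qed.

Lemma ev_ext y1 y2 p : y1 =1 y2 -> ev y1 p = ev y2 p.
Proof.
move=> e; rewrite /ev /mmap; apply: eq_bigr => m _; congr (_ * _).
exact: mmap1_eq.
Qed.

Definition Xv : 'I_n -> K := fun i => tofrac 'X_i.

Lemma ev_id p : ev Xv p = tofrac p.
Proof.
elim/mpolyind: p => [|c m p _ _ ih]; first by rewrite ev0 rmorph0.
rewrite evD rmorphD ih; congr (_ + _).
rewrite -mul_mpolyC evM rmorphM evC; congr (_ * _).
rewrite /ev mmapX /mmap1 mpolyXE_id rmorph_prod; apply: eq_bigr => i _.
by rewrite rmorphXn.
Qed.

Section RatMap.
Variables (A : ('I_n -> K) -> 'I_n -> K) (c : P).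
Hypothesis HA : forall v, exists q : P, forall y, ev y c != 0 -> ev y q = A y v * ev y c.

Definition good p := exists Q N, forall y, ev y c != 0 -> ev y Q = ev (A y) p * ev y c ^+ N.

Lemma good_C a : good a%:MP.
Proof. by exists a%:MP, 0%N => y _; rewrite !evC expr0 mulr1. Qed.

Lemma good_X v : good 'X_v.
Proof.
have [q hq] := HA v; exists q, 1%N => y hy; by rewrite hq // evX expr1.
Qed.

Lemma good_D p q : good p -> good q -> good (p + q).
Proof.
move=> [Q1 [N1 h1]] [Q2 [N2 h2]].
exists (Q1 * c ^+ N2 + Q2 * c ^+ N1), (N1 + N2)%N => y hy.
rewrite !evD !evM !evXn h1 // h2 // exprD; ring.
Qed.

Lemma good_M p q : good p -> good q -> good (p * q).
Proof.
move=> [Q1 [N1 h1]] [Q2 [N2 h2]].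
exists (Q1 * Q2), (N1 + N2)%N => y hy.
rewrite !evM h1 // h2 // exprD; ring.
Qed.

Lemma good_all p : good p.
Proof.
elim/mpolyind: p => [|a m p _ _ ih].
  by rewrite -mpolyC0; apply: good_C.
apply: good_D => //; rewrite -mul_mpolyC; apply: good_M; first exact: good_C.
rewrite mpolyXE_id; apply: (big_ind good) => //.
- by rewrite -mpolyC1; apply: good_C.
- exact: good_M.
move=> i _; elim: (m i) => [|k ihk]; first by rewrite expr0 -mpolyC1; apply: good_C.
by rewrite exprS; apply: good_M => //; apply: good_X.
Qed.

Hypothesis c0 : c != 0.
Variable y0 : 'I_n -> K.
Hypothesis Hy0c : ev y0 c != 0.
Hypothesis Hy0 : forall v, A y0 v = Xv v.

Lemma ev_inj p : ev (A Xv) p = 0 -> p = 0.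
Proof.
move=> hp; have [Q [N hQ]] := good_all p.
have cX : ev Xv c != 0 by rewrite ev_id tofrac_eq0.
have := hQ _ cX; rewrite hp mul0r ev_id => /eqP; rewrite tofrac_eq0 => /eqP Q0.
have := hQ _ Hy0c; rewrite Q0 ev0 (ev_ext _ _ _ Hy0) ev_id => /esym /eqP.
rewrite mulf_eq0 expf_eq0 (negbTE Hy0c) andbF orbF tofrac_eq0.
by move/eqP.
Qed.
End RatMap.

Definition gsubst (h : 'I_n -> K) (x : K) : K :=
  ev h (\n_(repr x)) / ev h (\d_(repr x)).

Section Subst.
Variable h : 'I_n -> K.
Hypothesis Hinj : forall p, ev h p = 0 -> p = 0.

Lemma ev_neq0 (p : P) : p != 0 -> ev h p != 0.
Proof. by apply: contra => /eqP /Hinj ->. Qed.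

Lemma fracE (x : K) : exists a b, b != 0 /\ x = tofrac a / tofrac b.
Proof. by exists (\n_(repr x)), (\d_(repr x)); split; [apply: frac_reprd | apply: frac_repr]. Qed.

Lemma gsubst_frac (a b : P) : b != 0 -> gsubst h (tofrac a / tofrac b) = ev h a / ev h b.
Proof.
move=> b0; rewrite /gsubst.
move: (frac_repr (tofrac a / tofrac b)) (frac_reprd (tofrac a / tofrac b)).
move: (repr _) => r hx hd.
move: hx hd; move: (\n_r) (\d_r) => nn dd hx hd.
have tb : tofrac b != 0 by rewrite tofrac_eq0.
have td : tofrac dd != 0 by rewrite tofrac_eq0.
have e1 : tofrac a * tofrac dd = tofrac nn * tofrac b.
  by rewrite -{1}(divfK tb (tofrac a)) hx mulrAC divfK.
have e : a * dd = nn * b by apply/eqP; rewrite -tofrac_eq !rmorphM e1.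
have eb := ev_neq0 _ b0; have ed := ev_neq0 _ hd.
have E : ev h a * ev h dd = ev h nn * ev h b by rewrite -!evM e.
by rewrite -[ev h a](mulfK ed) E mulrAC (mulfK eb).
Qed.

Lemma gsubstT p : gsubst h (tofrac p) = ev h p.
Proof.
have -> : tofrac p = tofrac p / tofrac 1 by rewrite rmorph1 divr1.
by rewrite gsubst_frac ?oner_neq0 // ev1 divr1.
Qed.

Lemma gsubstD x y : gsubst h (x + y) = gsubst h x + gsubst h y.
Proof.
have [a [b [b0 ->]]] := fracE x; have [a' [b' [b0' ->]]] := fracE y.
have tb : tofrac b != 0 by rewrite tofrac_eq0.
have tb' : tofrac b' != 0 by rewrite tofrac_eq0.
have eb := ev_neq0 _ b0; have eb' := ev_neq0 _ b0'.
have -> : tofrac a / tofrac b + tofrac a' / tofrac b' =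
    tofrac (a * b' + a' * b) / tofrac (b * b').
  by rewrite (addf_div _ _ tb tb') rmorphD !rmorphM.
rewrite (gsubst_frac _ _ (mulf_neq0 b0 b0')) (gsubst_frac _ _ b0) (gsubst_frac _ _ b0').
by rewrite (addf_div _ _ eb eb') evD !evM.
Qed.

Lemma gsubstM x y : gsubst h (x * y) = gsubst h x * gsubst h y.
Proof.
have [a [b [b0 ->]]] := fracE x; have [a' [b' [b0' ->]]] := fracE y.
have -> : tofrac a / tofrac b * (tofrac a' / tofrac b') =
    tofrac (a * a') / tofrac (b * b').
  by rewrite mulf_div !rmorphM.
rewrite (gsubst_frac _ _ (mulf_neq0 b0 b0')) (gsubst_frac _ _ b0) (gsubst_frac _ _ b0').
by rewrite mulf_div !evM.
Qed.

Lemma gsubst0 : gsubst h 0 = 0.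
Proof. by rewrite -(rmorph0 (@tofrac P)) gsubstT ev0. Qed.
Lemma gsubst1 : gsubst h 1 = 1.
Proof. by rewrite -(rmorph1 (@tofrac P)) gsubstT ev1. Qed.

Lemma gsubstN x : gsubst h (- x) = - gsubst h x.
Proof.
apply/eqP; rewrite -subr_eq0 opprK -gsubstD.
by rewrite addNr gsubst0.
Qed.
Lemma gsubstB x y : gsubst h (x - y) = gsubst h x - gsubst h y.
Proof. by rewrite gsubstD gsubstN. Qed.

Lemma gsubstV x : gsubst h (x^-1) = (gsubst h x)^-1.
Proof.
have [->|x0] := eqVneq x 0; first by rewrite invr0 gsubst0 invr0.
have e : gsubst h x * gsubst h x^-1 = 1 by rewrite -gsubstM mulfV // gsubst1.
have gx : gsubst h x != 0.
  by apply/eqP => g0; move: e; rewrite g0 mul0r => /eqP; rewrite eq_sym oner_eq0.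
by apply: (mulfI gx); rewrite e (mulfV gx).
Qed.

Lemma gsubstM' x y : gsubst h (x / y) = gsubst h x / gsubst h y.
Proof. by rewrite gsubstM gsubstV. Qed.

Lemma gsubst_sum (I : Type) (r : seq I) (F : I -> K) :
  gsubst h (\sum_(i <- r) F i) = \sum_(i <- r) gsubst h (F i).
Proof. exact: (big_morph _ gsubstD gsubst0). Qed.

End Subst.
End Gen.
Arguments ev {n} y p.
Arguments Xv {n} i.
Arguments gsubst {n} h x.
Arguments ev_ext {n y1 y2} p.
Arguments ev_inj {n A c} HA c0 {y0} Hy0c Hy0 p.
Arguments gsubstT {n h} Hinj p.
Arguments gsubstD {n h} Hinj x y.
Arguments gsubstM {n h} Hinj x y.
Arguments gsubstN {n h} Hinj x.
Arguments gsubstB {n h} Hinj x y.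
Arguments gsubstV {n h} Hinj x.
Arguments gsubstM' {n h} Hinj x y.
Arguments gsubst0 {n h} Hinj.
Arguments gsubst1 {n h} Hinj.
Arguments gsubst_sum {n h} Hinj {I} r F.
Lemma gsubstX n (h : 'I_n -> {fraction {mpoly CC[n]}}) (Hinj : forall p, ev h p = 0 -> p = 0) v :
  gsubst h (Xv v) = h v.
Proof. by rewrite /Xv (gsubstT Hinj) evX. Qed.
Arguments gsubstX {n h} Hinj v.


Lemma mpolyXi_neq0 n (i : 'I_n) : ('X_i : {mpoly CC[n]}) != 0.
Proof.
apply/eqP => h; have := (@mcoeffX n CC (U_(i))%MM (U_(i))%MM).
by rewrite -/(mpolyX _ _) h mcoeff0 eqxx => /eqP; rewrite eq_sym oner_eq0.
Qed.

Section L.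
Variable l : nat.
Hypothesis hl : (2 <= l)%N.
Local Notation NV := (NV l).
Local Notation KF := (KF l).
Local Notation Xv := (@Xv NV).
Local Notation eqm := (eqm l).

Lemma eqm_refl a : eqm a a.
Proof. exact: eqxx. Qed.
Lemma eqm_sym a b : eqm a b = eqm b a.
Proof. by rewrite /eqm eq_sym. Qed.
Lemma eqm_trans a b c : eqm a b -> eqm b c -> eqm a c.
Proof. by rewrite /eqm => /eqP -> /eqP ->. Qed.
Lemma eqm_mod a b : eqm (a %% l.+1)%N b = eqm a b.
Proof. by rewrite /eqm modn_mod. Qed.
Lemma eqm_shift a b : eqm a (b + l.+1)%N = eqm a b.
Proof. by rewrite /eqm modnDr. Qed.
Lemma eqm_ltF a b : (a < b)%N -> (b < a + l.+1)%N -> eqm a b = false.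
Proof.
move=> h1 h2; rewrite /eqm.
have -> : b = (a + (b - a))%N by lia.
rewrite -{1}(addn0 a) eqn_modDl mod0n modn_small; last by lia.
apply/negbTE; rewrite eq_sym; apply/eqP; lia.
Qed.
Lemma eqm_gtF a b : (b < a)%N -> (a < b + l.+1)%N -> eqm a b = false.
Proof. by move=> h1 h2; rewrite eqm_sym eqm_ltF. Qed.

Lemma var_lt (k : nat) : (k < NV)%N -> var l k = Xv (inord k).
Proof. by []. Qed.

Lemma lt_NV k : (k %% l.+1 < NV)%N.
Proof. rewrite /Defs.NV; have := ltn_pmod k (ltn0Sn l); lia. Qed.
Lemma lt_NV2 k : (l.+1 + k %% l.+1 < NV)%N.
Proof. rewrite /Defs.NV; have := ltn_pmod k (ltn0Sn l); lia. Qed.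

Lemma alpha_mod j : alpha l (j %% l.+1)%N = alpha l j.
Proof. by rewrite /alpha modn_mod. Qed.
Lemma fv_mod j : fv l (j %% l.+1)%N = fv l j.
Proof. by rewrite /fv modn_mod. Qed.

Lemma genimg_alpha a' f' j :
  genimg l a' f' (inord (j %% l.+1)%N) = a' (j %% l.+1)%N.
Proof.
rewrite /genimg inordK ?lt_NV // ltn_pmod //.
Qed.
Lemma genimg_fv a' f' j :
  genimg l a' f' (inord (l.+1 + j %% l.+1)%N) = f' (j %% l.+1)%N.
Proof.
rewrite /genimg inordK ?lt_NV2 // ltnNge leq_addr /=.
by rewrite addKn.
Qed.


Lemma alphaXv i : alpha l i = Xv (inord (i %% l.+1)%N).
Proof. by []. Qed.
Lemma fvXv i : fv l i = Xv (inord (l.+1 + i %% l.+1)%N).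
Proof. by []. Qed.

Definition ai i : 'I_NV := inord (i %% l.+1)%N.
Definition fi i : 'I_NV := inord (l.+1 + i %% l.+1)%N.

Lemma ai_val i : (ai i : nat) = (i %% l.+1)%N.
Proof. by rewrite /ai inordK // lt_NV. Qed.
Lemma fi_val i : (fi i : nat) = (l.+1 + i %% l.+1)%N.
Proof. by rewrite /fi inordK // lt_NV2. Qed.

Lemma Xv_val (v : 'I_NV) k : k = v -> Xv (inord k) = Xv v.
Proof. by move=> ->; rewrite inord_val. Qed.

Definition As i (y : 'I_NV -> KF) (v : 'I_NV) : KF :=
 if (v < l.+1)%N then
   (if eqm v i then - y v else if eqm v i.+1 || eqm v (i + l)%N then y v + y (ai i) else y v)
 else (if eqm (v - l.+1)%N i then y v
       else if eqm (v - l.+1)%N i.+1 then y v + y (ai i) / y (fi i)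
       else if eqm (v - l.+1)%N (i + l)%N then y v - y (ai i) / y (fi i) else y v).

Lemma genimg_s i : genimg l (s_alpha l i) (s_f l i) =1 As i Xv.
Proof.
move=> v; rewrite /genimg /As /s_alpha /s_f.
have ea : alpha l i = Xv (ai i) by [].
have ef : fv l i = Xv (fi i) by [].
case: ifP => hv.
  have e : alpha l v = Xv v.
    rewrite (_ : alpha l v = Xv (ai v)) //; congr (Xv _); apply: val_inj.
    by rewrite /= ai_val modn_small.
  by rewrite e ea.
have e : fv l (v - l.+1)%N = Xv v.
  rewrite (_ : fv l _ = Xv (fi (v - l.+1)%N)) //; congr (Xv _); apply: val_inj.
  rewrite /= fi_val modn_small; last first.
    have := ltn_ord v; rewrite /Defs.NV; lia.
  move: hv; rewrite ltnNge => /negbFE; lia.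
by rewrite e ea ef.
Qed.

Lemma As_ai i : As i Xv (ai i) = - Xv (ai i).
Proof.
rewrite /As ai_val ltn_pmod // eqm_mod eqm_refl //.
Qed.
Lemma As_fi i : As i Xv (fi i) = Xv (fi i).
Proof.
rewrite /As fi_val ltnNge leq_addr /= addKn eqm_mod eqm_refl //.
Qed.

Lemma Xv_neq0 v : Xv v != 0.
Proof. by rewrite /Xv tofrac_eq0 mpolyXi_neq0. Qed.

Lemma AsAs i v : As i (As i Xv) v = Xv v.
Proof.
rewrite {1}/As As_ai As_fi /As.
case: ifP => hv.
  case: ifP => h1; first by rewrite hv h1 opprK.
  by case: ifP => h2; rewrite hv h1 h2 // addrK.
case: ifP => h1; first by rewrite hv h1.
case: ifP => h2; first by rewrite hv h1 h2 mulNr addrK.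
by case: ifP => h3; rewrite hv h1 h2 h3 // mulNr opprK subrK.
Qed.

Lemma HA_s i : forall v, exists q : {mpoly CC[NV]},
  forall y, ev y 'X_(fi i) != 0 -> ev y q = As i y v * ev y 'X_(fi i).
Proof.
move=> v; rewrite /As.
case hv: (v < l.+1)%N.
  case h1: (eqm v i).
    by exists (- 'X_v * 'X_(fi i)) => y hy; rewrite evM evN !evX.
  case h2: (eqm v i.+1 || eqm v (i + l)%N).
    by exists (('X_v + 'X_(ai i)) * 'X_(fi i)) => y hy; rewrite evM evD !evX.
  by exists ('X_v * 'X_(fi i)) => y hy; rewrite evM !evX.
case h1: (eqm (v - l.+1)%N i).
  by exists ('X_v * 'X_(fi i)) => y hy; rewrite evM !evX.
case h2: (eqm (v - l.+1)%N i.+1).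
  exists ('X_v * 'X_(fi i) + 'X_(ai i)) => y; rewrite evD evM !evX => hy.
  by rewrite mulrDl (divfK hy).
case h3: (eqm (v - l.+1)%N (i + l)%N).
  exists ('X_v * 'X_(fi i) - 'X_(ai i)) => y; rewrite evB evM !evX => hy.
  by rewrite mulrBl (divfK hy).
by exists ('X_v * 'X_(fi i)) => y hy; rewrite evM !evX.
Qed.

Lemma s_inj i p : ev (genimg l (s_alpha l i) (s_f l i)) p = 0 -> p = 0.
Proof.
rewrite (ev_ext _ (genimg_s i)).
apply: (ev_inj (HA_s i) (mpolyXi_neq0 _ (fi i)) (y0 := As i Xv)).
  by rewrite evX As_fi Xv_neq0.
exact: AsAs.
Qed.


Lemma val_inord k : (k < NV)%N -> ((inord k : 'I_NV) : nat) = k.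
Proof. by move=> h; rewrite inordK. Qed.

Definition sig1 (v : 'I_NV) : 'I_NV :=
  if (v < l.+1)%N then inord ((v.+1) %% l.+1)%N else inord (l.+1 + (v - l.+1).+1 %% l.+1)%N.
Definition sig0 (v : 'I_NV) : 'I_NV :=
  if (v < l.+1)%N then inord ((v + l) %% l.+1)%N else inord (l.+1 + ((v - l.+1) + l) %% l.+1)%N.

Lemma sig01 v : sig0 (sig1 v) = v.
Proof.
have vlt : (v < l.+1 + l.+1)%N := ltn_ord v.
apply: ord_inj; rewrite /sig1; case: ifP => hv.
  rewrite /sig0 inordK; last by apply: lt_NV.
  rewrite ltn_pmod // inordK; last by apply: lt_NV.
  rewrite modnDml addSnnS modnDr modn_small //.
rewrite /sig0 inordK; last by apply: lt_NV2.
rewrite ltnNge leq_addr /= addKn inordK; last by apply: lt_NV2.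
rewrite modnDml (addSnnS (v - l.+1)) modnDr modn_small.
  move: hv; rewrite ltnNge => /negbFE; lia.
move: hv vlt; rewrite ltnNge => /negbFE; lia.
Qed.

Definition Ap (y : 'I_NV -> KF) (v : 'I_NV) : KF := y (sig1 v).

Lemma genimg_pi : genimg l (fun j => alpha l j.+1) (fun j => fv l j.+1) =1 Ap Xv.
Proof. by move=> v; rewrite /genimg /Ap /sig1; case: ifP. Qed.

Lemma pi_inj p : ev (genimg l (fun j => alpha l j.+1) (fun j => fv l j.+1)) p = 0 -> p = 0.
Proof.
rewrite (ev_ext _ genimg_pi).
have HA : forall v, exists q : {mpoly CC[NV]},
  forall y, ev y 1 != 0 -> ev y q = Ap y v * ev y 1.
  by move=> v; exists 'X_(sig1 v) => y _; rewrite evX ev1 mulr1.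
apply: (ev_inj HA (oner_neq0 _) (y0 := fun v => Xv (sig0 v))).
  by rewrite ev1 oner_neq0.
by move=> v; rewrite /Ap sig01.
Qed.

Lemma sE i x : s l i x = gsubst (genimg l (s_alpha l i) (s_f l i)) x.
Proof. by []. Qed.
Lemma piE x : Defs.pi l x = gsubst (genimg l (fun j => alpha l j.+1) (fun j => fv l j.+1)) x.
Proof. by []. Qed.

Lemma sD i x y : s l i (x + y) = s l i x + s l i y.
Proof. by rewrite !sE (gsubstD (s_inj i)). Qed.
Lemma sB i x y : s l i (x - y) = s l i x - s l i y.
Proof. by rewrite !sE (gsubstB (s_inj i)). Qed.
Lemma sN i x : s l i (- x) = - s l i x.
Proof. by rewrite !sE (gsubstN (s_inj i)). Qed.
Lemma sM i x y : s l i (x * y) = s l i x * s l i y.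
Proof. by rewrite !sE (gsubstM (s_inj i)). Qed.
Lemma sV i x : s l i (x^-1) = (s l i x)^-1.
Proof. by rewrite !sE (gsubstV (s_inj i)). Qed.
Lemma sdiv i x y : s l i (x / y) = s l i x / s l i y.
Proof. by rewrite sM sV. Qed.
Lemma s_sum i (I : Type) (r : seq I) (F : I -> KF) :
  s l i (\sum_(j <- r) F j) = \sum_(j <- r) s l i (F j).
Proof. by rewrite sE (gsubst_sum (s_inj i)). Qed.

Lemma piD x y : Defs.pi l (x + y) = Defs.pi l x + Defs.pi l y.
Proof. by rewrite !piE (gsubstD pi_inj). Qed.
Lemma piB x y : Defs.pi l (x - y) = Defs.pi l x - Defs.pi l y.
Proof. by rewrite !piE (gsubstB pi_inj). Qed.
Lemma piN x : Defs.pi l (- x) = - Defs.pi l x.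
Proof. by rewrite !piE (gsubstN pi_inj). Qed.
Lemma piM x y : Defs.pi l (x * y) = Defs.pi l x * Defs.pi l y.
Proof. by rewrite !piE (gsubstM pi_inj). Qed.
Lemma piV x : Defs.pi l (x^-1) = (Defs.pi l x)^-1.
Proof. by rewrite !piE (gsubstV pi_inj). Qed.
Lemma pidiv x y : Defs.pi l (x / y) = Defs.pi l x / Defs.pi l y.
Proof. by rewrite piM piV. Qed.
Lemma pi_sum (I : Type) (r : seq I) (F : I -> KF) :
  Defs.pi l (\sum_(j <- r) F j) = \sum_(j <- r) Defs.pi l (F j).
Proof. by rewrite piE (gsubst_sum pi_inj). Qed.

Lemma s_alphaE i j : s l i (alpha l j) = s_alpha l i j.
Proof.
by rewrite sE alphaXv (gsubstX (s_inj i)) genimg_alpha /s_alpha !eqm_mod alpha_mod.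
Qed.
Lemma s_fvE i j : s l i (fv l j) = s_f l i j.
Proof.
by rewrite sE fvXv (gsubstX (s_inj i)) genimg_fv /s_f !eqm_mod fv_mod.
Qed.
Lemma modS a : ((a %% l.+1).+1 %% l.+1 = a.+1 %% l.+1)%N.
Proof. by rewrite -[(a %% l.+1).+1]addn1 modnDml addn1. Qed.

Lemma pi_alpha j : Defs.pi l (alpha l j) = alpha l j.+1.
Proof.
rewrite piE alphaXv (gsubstX pi_inj) genimg_alpha.
by rewrite /alpha modS.
Qed.
Lemma pi_fv j : Defs.pi l (fv l j) = fv l j.+1.
Proof.
rewrite piE fvXv (gsubstX pi_inj) genimg_fv.
by rewrite /fv modS.
Qed.

End L.


Arguments sD {l} hl i x y. Arguments sB {l} hl i x y. Arguments sN {l} hl i x.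
Arguments sM {l} hl i x y. Arguments sV {l} hl i x. Arguments sdiv {l} hl i x y.
Arguments s_sum {l} hl i {I} r F.
Arguments piD {l} hl x y. Arguments piB {l} hl x y. Arguments piN {l} hl x.
Arguments piM {l} hl x y. Arguments piV {l} hl x. Arguments pidiv {l} hl x y.
Arguments pi_sum {l} hl {I} r F.
Arguments s_alphaE {l} hl i j. Arguments s_fvE {l} hl i j.
Arguments pi_alpha {l} hl j. Arguments pi_fv {l} hl j.
Arguments eqm_ltF {l} hl a b. Arguments eqm_gtF {l} hl a b.
Arguments eqm_refl {l} a. Arguments eqm_sym {l} a b.
Arguments eqm_trans {l a b c}. Arguments eqm_shift {l} a b.

Section L.
Variable l : nat.
Hypothesis hl : (2 <= l)%N.
Local Notation a := (alpha l).
Local Notation f := (fv l).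

Lemma s_self m j : eqm l j m -> s l m (a j) = - a j /\ s l m (f j) = f j.
Proof. by move=> h; rewrite (s_alphaE hl) (s_fvE hl) /s_alpha /s_f h. Qed.

Lemma s_next m j : eqm l j m.+1 -> s l m (a j) = a j + a m /\ s l m (f j) = f j + a m / f m.
Proof.
move=> h.
have F1 : eqm l m m.+1 = false by apply: (eqm_ltF hl); lia.
have h0 : eqm l j m = false.
  apply/negbTE; apply: contraFN F1 => h0; apply: (eqm_trans _ h).
  by rewrite eqm_sym.
by rewrite (s_alphaE hl) (s_fvE hl) /s_alpha /s_f h0 h.
Qed.

Lemma s_prev m j : eqm l j (m + l)%N -> s l m (a j) = a j + a m /\ s l m (f j) = f j - a m / f m.
Proof.
move=> h.
have F1 : eqm l m (m + l)%N = false by apply: (eqm_ltF hl); lia.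
have F2 : eqm l m.+1 (m + l)%N = false by apply: (eqm_ltF hl); lia.
have h0 : eqm l j m = false.
  apply/negbTE; apply: contraFN F1 => h0; apply: (eqm_trans _ h).
  by rewrite eqm_sym.
have h1 : eqm l j m.+1 = false.
  apply/negbTE; apply: contraFN F2 => h0'; apply: (eqm_trans _ h).
  by rewrite eqm_sym.
by rewrite (s_alphaE hl) (s_fvE hl) /s_alpha /s_f h0 h1 h orbT.
Qed.

Lemma s_fix m j : eqm l j m = false -> eqm l j m.+1 = false -> eqm l j (m + l)%N = false ->
  s l m (a j) = a j /\ s l m (f j) = f j.
Proof. by move=> h0 h1 h2; rewrite (s_alphaE hl) (s_fvE hl) /s_alpha /s_f h0 h1 h2. Qed.

Lemma s_fix_lt m j : (j.+2 <= m)%N -> (m < j + l)%N -> s l m (a j) = a j /\ s l m (f j) = f j.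
Proof.
move=> h1 h2; apply: s_fix.
- by apply: (eqm_ltF hl); lia.
- by apply: (eqm_ltF hl); lia.
rewrite (_ : (m + l = m.-1 + l.+1)%N); last by lia.
by rewrite eqm_shift; apply: (eqm_ltF hl); lia.
Qed.

Lemma s_fix_gt m j : (m.+2 <= j)%N -> (j < m + l)%N -> s l m (a j) = a j /\ s l m (f j) = f j.
Proof.
move=> h1 h2; apply: s_fix.
- by apply: (eqm_gtF hl); lia.
- by apply: (eqm_gtF hl); lia.
by apply: (eqm_ltF hl); lia.
Qed.

Lemma s_prevS j : s l j.+1 (a j) = a j + a j.+1 /\ s l j.+1 (f j) = f j - a j.+1 / f j.+1.
Proof. by apply: s_prev; rewrite addSnnS eqm_shift eqm_refl. Qed.
Lemma s_nextS m : s l m (a m.+1) = a m.+1 + a m /\ s l m (f m.+1) = f m.+1 + a m / f m.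
Proof. by apply: s_next; rewrite eqm_refl. Qed.
Lemma s_selfS m : s l m (a m) = - a m /\ s l m (f m) = f m.
Proof. by apply: s_self; rewrite eqm_refl. Qed.

Lemma cfracS k r : cfrac l k r.+1 = (\sum_(i < r.+2) a (k + i)) / (f k - cfrac l k.+1 r).
Proof. by []. Qed.

Lemma cfrac_step r k : (r.+2 <= l)%N -> s l (k + r.+1) (cfrac l k r) = cfrac l k r.+1.
Proof.
elim: r k => [|r IH] k hr.
  rewrite /= (sdiv hl) addn1 (s_prevS k).1 (s_prevS k).2.
  by rewrite !big_ord_recr big_ord0 /= add0r addn0 addn1.
rewrite (cfracS k r) (cfracS k r.+1).
rewrite (sdiv hl) (sB hl) (s_sum hl).
have IH' : s l (k + r.+2) (cfrac l k.+1 r) = cfrac l k.+1 r.+1.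
  rewrite (_ : (k + r.+2 = k.+1 + r.+1)%N); last by lia.
  by apply: IH; lia.
have Ef : s l (k + r.+2) (f k) = f k by apply: (s_fix_lt _ _ _ _).2; lia.
rewrite IH' Ef; congr (_ / _).
rewrite big_ord_recr /= [in RHS]big_ord_recr /= [in RHS]big_ord_recr /= -addrA.
congr (_ + _).
  apply: eq_bigr => i _; apply: (s_fix_lt _ _ _ _).1.
    have := ltn_ord i; lia.
  have := ltn_ord i; lia.
by rewrite addnS (s_prevS _).1.
Qed.

Lemma g_cfrac r k : (r <= l.-1)%N -> g l k r = cfrac l k r.
Proof.
elim: r => [|r IH] hr //.
rewrite [g l k r.+1]/= IH; last by lia.
by apply: cfrac_step; lia.
Qed.

Lemma pi_cfrac r k : Defs.pi l (cfrac l k r) = cfrac l k.+1 r.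
Proof.
elim: r k => [|r IH] k.
  by rewrite /= (pidiv hl) (pi_alpha hl) (pi_fv hl).
rewrite (cfracS k r) (cfracS k.+1 r).
rewrite (pidiv hl) (piB hl) (pi_sum hl) (pi_fv hl) IH; congr (_ / _).
by apply: eq_bigr => i _; rewrite (pi_alpha hl) addSn.
Qed.


Lemma sprodS m x : sprod l m.+1 x = s l m.+1 (sprod l m x).
Proof. by []. Qed.
Lemma sprod_pred m x : (0 < m)%N -> sprod l m x = s l m (sprod l m.-1 x).
Proof. by case: m. Qed.
Lemma alpha_lS : a l.+1 = a 0.
Proof. by rewrite /alpha modnn mod0n. Qed.
Lemma fv_lS : f l.+1 = f 0.
Proof. by rewrite /fv modnn mod0n. Qed.
Lemma s_next0 : s l l (a 0) = a 0 + a l /\ s l l (f 0) = f 0 + a l / f l.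
Proof. by apply: s_next; rewrite -[l.+1]add0n eqm_shift eqm_refl. Qed.

Lemma sprod_f0 m : (1 <= m <= l.-1)%N -> sprod l m (f 0) = f 0 - cfrac l 1 m.-1.
Proof.
elim: m => [//|m IH] hm.
case: m IH hm => [|m] IH hm.
  by rewrite /= (s_prevS 0).2.
rewrite sprodS IH; last by lia.
have E0 : s l m.+2 (f 0) = f 0 by apply: (s_fix_lt _ _ _ _).2; lia.
have h := cfrac_step m 1.
have e : (1 + m.+1 = m.+2)%N by lia.
rewrite e in h.
by rewrite (sB hl) E0 h //; lia.
Qed.

Lemma T1_f0 : T1 l (f 0) = f 1 - g l 2 l.-1 + g l 0 0.
Proof.
rewrite /T1 (sprod_pred _ _ (ltnW hl)) sprod_f0; last by lia.
rewrite (sB hl) s_next0.2.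
have h := cfrac_step (l.-1).-1 1.
have e : (1 + (l.-1).-1.+1 = l)%N by lia.
rewrite e in h; rewrite h; last by lia.
rewrite (piB hl) (piD hl) (pidiv hl) (pi_fv hl) (pi_alpha hl) (pi_fv hl) pi_cfrac.
rewrite alpha_lS fv_lS (g_cfrac _ 2); last by lia.
have e2 : ((l.-1).-1.+1 = l.-1)%N by lia.
by rewrite e2 /= addrAC.
Qed.

Lemma sprod_f1 m : (2 <= m <= l)%N -> sprod l m (f 1) = f 1 - cfrac l 2 (m - 2).
Proof.
elim: m => [//|m IH] hm.
case: m IH hm => [//|m] IH hm.
case: m IH hm => [|m] IH hm.
  by rewrite /= (s_selfS 1).2 (s_prevS 1).2.
rewrite sprodS IH; last by lia.
have E1 : s l m.+3 (f 1) = f 1 by apply: (s_fix_lt _ _ _ _).2; lia.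
have h := cfrac_step m 2.
have e : (2 + m.+1 = m.+3)%N by lia.
rewrite e in h.
have e1 : (m.+2 - 2 = m)%N by lia.
have e2 : (m.+3 - 2 = m.+1)%N by lia.
by rewrite e1 e2 (sB hl) E1 h //; lia.
Qed.

Lemma T1_f1 : T1 l (f 1) = f 2 - g l 3 (l - 2).
Proof.
rewrite /T1 sprod_f1; last by lia.
rewrite (piB hl) (pi_fv hl) pi_cfrac g_cfrac //; lia.
Qed.

Lemma sprod_low j m : (2 <= j <= l)%N -> (m <= j.-2)%N ->
  sprod l m (a j) = a j /\ sprod l m (f j) = f j.
Proof.
elim: m => [//|m IH] hj hm.
have [h1 h2] := IH hj (ltnW hm).
rewrite !sprodS h1 h2; apply: s_fix_gt; lia.
Qed.

Lemma sprod_fj_mid i : (i.+2 <= l.-1)%N ->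
  sprod l i.+3 (f i.+2) = f i.+2 + cfrac l i.+1 2 - cfrac l i.+3 0.
Proof.
move=> hi.
rewrite !sprodS (sprod_low i.+2 i _ _).2; [|lia|lia].
rewrite (s_nextS i.+1).2.
have -> : a i.+1 / f i.+1 = cfrac l i.+1 0 by [].
rewrite (sD hl) (s_selfS i.+2).2.
have h0 := cfrac_step 0 i.+1; rewrite addn1 in h0.
rewrite h0; last by lia.
rewrite (sD hl) (s_prevS i.+2).2.
have h1 := cfrac_step 1 i.+1.
have e : (i.+1 + 2 = i.+3)%N by lia.
rewrite e in h1; rewrite h1; last by lia.
by rewrite /= addrAC.
Qed.

Lemma sprod_fj_high i d : (i.+2 <= l.-1)%N -> (i.+3 + d <= l)%N ->
  sprod l (i.+3 + d) (f i.+2) = f i.+2 + cfrac l i.+1 d.+2 - cfrac l i.+3 d.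
Proof.
elim: d => [|d IH] h1 h2.
  by rewrite addn0 sprod_fj_mid.
rewrite addnS sprodS IH; [|lia|lia].
rewrite (sB hl) (sD hl).
have E : s l (i.+3 + d).+1 (f i.+2) = f i.+2 by apply: (s_fix_lt _ _ _ _).2; lia.
have ha := cfrac_step d.+2 i.+1.
have e : (i.+1 + d.+3 = (i.+3 + d).+1)%N by lia.
rewrite e in ha.
have hb := cfrac_step d i.+3.
have e' : (i.+3 + d.+1 = (i.+3 + d).+1)%N by lia.
rewrite e' in hb.
by rewrite E ha ?hb //; lia.
Qed.

Lemma T1_fj j : (2 <= j <= l.-1)%N ->
  T1 l (f j) = f j.+1 - g l j.+2 (l.-1 - j) + g l j (l.+1 - j).
Proof.
case: j => [//|[//|i]] hj.
have E := sprod_fj_high i (l - i.+3) ltac:(lia) ltac:(lia).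
have e : (i.+3 + (l - i.+3) = l)%N by lia.
rewrite e in E.
rewrite /T1 E (piB hl) (piD hl) (pi_fv hl) !pi_cfrac.
rewrite !g_cfrac; [|lia|lia].
have e1 : (l.-1 - i.+2 = l - i.+3)%N by lia.
have e2 : (l.+1 - i.+2 = (l - i.+3).+2)%N by lia.
by rewrite e1 e2 addrAC.
Qed.

Lemma T1_fl : T1 l (f l) = f 0 + g l l 1.
Proof.
rewrite /T1 (sprod_pred _ _ (ltnW hl)) (sprod_pred l.-1); last by lia.
rewrite (sprod_low l (l.-1).-1 _ _).2; [|lia|lia].
have el : f l = f (l.-1).+1 by rewrite prednK //; lia.
have hn : s l l.-1 (f l) = f l + a l.-1 / f l.-1.
  by rewrite el (s_nextS _).2 -el.
rewrite hn.
have -> : a l.-1 / f l.-1 = cfrac l l.-1 0 by [].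
rewrite (sD hl) (s_selfS l).2.
have h0 := cfrac_step 0 l.-1.
have e : (l.-1 + 1 = l)%N by lia.
rewrite e in h0; rewrite h0; last by lia.
rewrite (piD hl) (pi_fv hl) pi_cfrac fv_lS g_cfrac; last by lia.
by rewrite prednK //; lia.
Qed.


Lemma s_prevE m j : m = j.+1 -> s l m (a j) = a j + a m /\ s l m (f j) = f j - a m / f m.
Proof. by move=> ->; exact: s_prevS. Qed.

Lemma sprod_a0 m : (1 <= m <= l.-1)%N -> sprod l m (a 0) = \sum_(i < m.+1) a i.
Proof.
elim: m => [//|m IH] hm.
case: m IH hm => [|m] IH hm.
  by rewrite /= (s_prevS 0).1 !big_ord_recr big_ord0 /= add0r.
rewrite sprodS IH; last by lia.
rewrite (s_sum hl) big_ord_recr /= [in RHS]big_ord_recr /= [in RHS]big_ord_recr /=.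
rewrite -addrA; congr (_ + _).
  apply: eq_bigr => i _; apply: (s_fix_lt _ _ _ _).1.
    have := ltn_ord i; lia.
  have := ltn_ord i; lia.
by rewrite (s_prevS _).1.
Qed.

Lemma T1_a0 : T1 l (a 0) = a 0 + delta l.
Proof.
rewrite /T1 (sprod_pred _ _ (ltnW hl)) sprod_a0; last by lia.
have [n el] : exists n, l = n.+2 by exists l.-2; lia.
have e1 : (l.-1.+1 = n.+2)%N by lia.
have D : delta l = \sum_(i < n.+3) a i.
  rewrite /delta.
  have H : forall m, m = n.+3 -> \sum_(i < m) a i = \sum_(i < n.+3) a i by move=> m ->.
  by apply: H; rewrite el.
rewrite e1 D.
rewrite big_ord_recl big_ord_recr /=.
rewrite !(sD hl) (s_sum hl) s_next0.1.
rewrite (s_prevE l n.+1 _).1; last by rewrite el.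
rewrite !(piD hl) (pi_sum hl) !(pi_alpha hl) alpha_lS.
rewrite [in RHS]big_ord_recl [in RHS]big_ord_recr [in RHS]big_ord_recl /=.
have b0 : forall i, bump 0 i = i.+1 by move=> i; rewrite /bump leq0n add1n.
rewrite !b0.
have -> : \sum_(j < n) Defs.pi l (s l l (a j.+1)) = \sum_(i < n) a i.+2.
  apply: eq_bigr => i _; rewrite (s_fix_lt _ _ _ _).1 ?(pi_alpha hl) //.
    have := ltn_ord i; lia.
  lia.
ring.
Qed.


Lemma sprod_a1 m : (1 <= m <= l)%N -> sprod l m (a 1) = - \sum_(i < m) a i.+1.
Proof.
elim: m => [//|m IH] hm.
case: m IH hm => [|m] IH hm.
  by rewrite /= (s_selfS 1).1 big_ord_recr big_ord0 /= add0r.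
rewrite sprodS IH; last by lia.
rewrite (sN hl) (s_sum hl) big_ord_recr /= [in RHS]big_ord_recr /= [in RHS]big_ord_recr /=.
rewrite -addrA; congr (- (_ + _)).
  apply: eq_bigr => i _; apply: (s_fix_lt _ _ _ _).1.
    have := ltn_ord i; lia.
  have := ltn_ord i; lia.
by rewrite (s_prevS _).1.
Qed.

Lemma T1_a1 : T1 l (a 1) = a 1 - delta l.
Proof.
rewrite /T1 sprod_a1; last by lia.
rewrite (piN hl) (pi_sum hl).
have -> : \sum_(i < l) Defs.pi l (a i.+1) = \sum_(i < l) a i.+2.
  by apply: eq_bigr => i _; rewrite (pi_alpha hl).
have b0 : forall i, bump 0 i = i.+1 by move=> i; rewrite /bump leq0n add1n.
have E1 : \sum_(i < l.+1) a i.+1 = \sum_(i < l) a i.+1 + a l.+1 by rewrite big_ord_recr.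
have E2 : \sum_(i < l.+1) a i.+1 = a 1 + \sum_(i < l) a i.+2.
  rewrite big_ord_recl /=; congr (_ + _); apply: eq_bigr => i _; by rewrite b0.
rewrite alpha_lS in E1.
have D : delta l = a 0 + \sum_(i < l) a i.+1.
  by rewrite /delta big_ord_recl /=; congr (_ + _); apply: eq_bigr => i _; rewrite b0.
rewrite D.
have -> : \sum_(i < l) a i.+2 = \sum_(i < l) a i.+1 + a 0 - a 1.
  by rewrite -E1 E2; ring.
ring.
Qed.

Lemma sprod_aj_high i d : (i.+2 + d <= l)%N -> sprod l (i.+2 + d) (a i.+2) = a i.+1.
Proof.
elim: d => [|d IH] h.
  rewrite addn0 !sprodS (sprod_low i.+2 i _ _).1; [|lia|lia].
  rewrite (s_nextS i.+1).1 (sD hl) (s_selfS i.+2).1 (s_prevS i.+1).1.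
  by rewrite addrC addrK.
rewrite addnS sprodS IH; last by lia.
apply: (s_fix_lt _ _ _ _).1; lia.
Qed.

Lemma T1_aj j : (j <= l)%N -> j != 0%N -> j != 1%N -> T1 l (a j) = a j.
Proof.
case: j => [//|[//|i]] hj _ _.
have E := sprod_aj_high i (l - i.+2) ltac:(lia).
have e : (i.+2 + (l - i.+2) = l)%N by lia.
rewrite e in E.
by rewrite /T1 E (pi_alpha hl).
Qed.

End L.

Theorem mainTheorem5 (l : nat) (hl : (2 <= l)%N) :
  (forall k r : nat, (k <= l)%N -> (r <= l.-1)%N -> g l k r = cfrac l k r) /\
  T1 l (fv l 0) = fv l 1 - g l 2 l.-1 + g l 0 0 /\
  T1 l (fv l 1) = fv l 2 - g l 3 (l - 2) /\
  (forall j : nat, (2 <= j <= l.-1)%N ->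
     T1 l (fv l j) = fv l j.+1 - g l j.+2 (l.-1 - j) + g l j (l.+1 - j)) /\
  T1 l (fv l l) = fv l 0 + g l l 1 /\
  T1 l (alpha l 0) = alpha l 0 + delta l /\
  T1 l (alpha l 1) = alpha l 1 - delta l /\
  (forall j : nat, (j <= l)%N -> j != 0%N -> j != 1%N -> T1 l (alpha l j) = alpha l j).
Proof.
split; first by move=> k r _ hr; apply: (g_cfrac l hl).
split; first exact: (T1_f0 l hl).
split; first exact: (T1_f1 l hl).
split; first exact: (T1_fj l hl).
split; first exact: (T1_fl l hl).
split; first exact: (T1_a0 l hl).
split; first exact: (T1_a1 l hl).
exact: (T1_aj l hl).
Qed.
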